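(* Let $v$ be an arbitrary nonempty word of length $m$ whose letters are positive integers (repetitions allowed), and let $n\ge m$. Then the map ${\bf F}_3$ defined below restricts to a bijection of $\mathrm{Sh}(0^{n-m}v)$ onto itself, and for every $w\in\mathrm{Sh}(0^{n-m}v)$: $$\mathrm{maj}\,w=\mathrm{mafz}\,{\bf F}_3(w),$$ and the last (rightmost) letter of $w$ equals the last letter of ${\bf F}_3(w)$.
   Context: Words have nonnegative integer letters. For $w=x_1\cdots x_n$: $\mathrm{DES}\,w=\{i:1\le i\le n-1,\ x_i>x_{i+1}\}$, $\mathrm{maj}\,w=\sum_{i\in\mathrm{DES}\,w}i$; $\mathrm{Zero}\,w=\{i:x_i=0\}$, $\mathrm{zero}\,w=\#\mathrm{Zero}\,w$; $\mathrm{Pos}\,w$ is the subword of positive letters. $\mathrm{mafz}\,w=\sum_{i\in\mathrm{Zero}\,w}i-\sum_{i=1}^{\mathrm{zero}\,w}i+\mathrm{maj}\,\mathrm{Pos}\,w$. For a word $v$ of positive integers of length $m\le n$, $\mathrm{Sh}(0^{n-m}v)$ is the set of words of length $n$ with exactly $n-m$ zeros and with $\mathrm{Pos}\,w=v$. The map ${\bf F}_3$ on all finite words with nonnegative letters is defined by induction on the length $n$. If $n\le1$, or if all letters of $w$ other than the last are $0$, then ${\bf F}_3(w)=w$. Otherwise write uniquely $w=w'a0^rb$, where $a\ge1$ is the rightmost positive letter among the first $n-1$ letters, $r\ge0$, $b\ge0$ is the last letter, and $w'$ is a (possibly empty) word. (1) If $a\le b$: ${\bf F}_3(w)={\bf F}_3(w'a0^r)\,b$.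 (2) If $a>b$ and $r\ge1$: write ${\bf F}_3(w'a0^r)=w''c$ with $c$ a letter; then ${\bf F}_3(w)=0\,w''\,b$ (i.e. add a $0$ on the left, delete the rightmost letter, which is a $0$, and append $b$). (3) If $a>b$ and $r=0$: write ${\bf F}_3(w'a)=0^{m_1}x_1v_10^{m_2}x_2v_2\cdots0^{m_k}x_kv_k$ with $m_1\ge0$, $m_2,\dots,m_k\ge1$, $x_1,\dots,x_k$ positive letters and $v_1,\dots,v_k$ (possibly empty) words of positive letters; let $\delta({\bf F}_3(w'a))=x_10^{m_1}v_1x_20^{m_2}v_2\cdots x_k0^{m_k}v_k$, and set ${\bf F}_3(w)=\delta({\bf F}_3(w'a))\,b$. *)

(* Defs.v *)
From mathcomp Require Import all_boot.
Set Implicit Arguments. Unset Strict Implicit. Unset Printing Implicit Defensive.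

(* Words are seq nat; positions are 1-based as in the paper. *)

Definition maj (w : seq nat) : nat :=
  \sum_(0 <= i < (size w).-1 | nth 0 w i > nth 0 w i.+1) i.+1.

Definition zero (w : seq nat) : nat := count (pred1 0) w.

Definition Pos (w : seq nat) : seq nat := filter (fun x => 0 < x) w.

Definition mafz (w : seq nat) : nat :=
  (\sum_(0 <= i < size w | nth 0 w i == 0) i.+1)
  - (\sum_(1 <= i < (zero w).+1) i) + maj (Pos w).

Definition Sh (n : nat) (v : seq nat) : pred (seq nat) :=
  fun w => [&& size w == n, zero w == n - size v & Pos w == v].

(* delta (0^{m1} x1 v1 0^{m2} x2 v2 ...) = x1 0^{m1} v1 x2 0^{m2} v2 ...
   (z counts the pending run of zeros) *)
Fixpoint delta_aux (z : nat) (s : seq nat) : seq nat :=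
  match s with
  | [::] => nseq z 0
  | x :: s' => if x == 0 then delta_aux z.+1 s'
               else x :: nseq z 0 ++ delta_aux 0 s'
  end.
Definition delta (s : seq nat) : seq nat := delta_aux 0 s.

(* F3_step u fu b = F3 (rcons u b), given fu = F3 u. *)
Definition F3_step (u fu : seq nat) (b : nat) : seq nat :=
  if all (pred1 0) u then rcons u b
  else
    let r := find (fun x => x != 0) (rev u) in  (* trailing zeros of u *)
    let a := nth 0 (rev u) r in                  (* rightmost positive letter *)
    if a <= b then rcons fu b
    else if 0 < r then rcons (0 :: take (size fu).-1 fu) b
    else rcons (delta fu) b.

Fixpoint F3_rev (rw : seq nat) : seq nat :=
  match rw with
  | [::] => [::]
  | b :: ru => F3_step (rev ru) (F3_rev ru) b
  end.
Definition F3 (w : seq nat) : seq nat := F3_rev (rev w).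

(* Main.v *)
Require Import Defs.
From mathcomp Require Import all_boot.
From mathcomp Require Import zify.
Set Implicit Arguments. Unset Strict Implicit.

Fixpoint Sr (s : seq nat) : nat :=
  match s with [::] => 0 | x :: s' => (x == 0) + Sr s' + zero s' end.

Definition T (z : nat) : nat := \sum_(1 <= i < z.+1) i.

Lemma T0 : T 0 = 0. Proof. by rewrite /T big_geq. Qed.
Lemma TS z : T z.+1 = T z + z.+1.
Proof. by rewrite /T big_nat_recr. Qed.

Lemma zero_cons x s : zero (x :: s) = (x == 0) + zero s.
Proof. by []. Qed.
Lemma zero_cat a b : zero (a ++ b) = zero a + zero b.
Proof. by rewrite /zero count_cat. Qed.
Lemma zero_rcons s x : zero (rcons s x) = zero s + (x == 0).
Proof. by rewrite -cats1 zero_cat /zero /= addn0. Qed.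

Lemma Sr_cat a b : Sr (a ++ b) = Sr a + Sr b + size a * zero b.
Proof.
elim: a => [|x a IH] /=; first by rewrite mul0n addn0.
rewrite IH zero_cat; lia.
Qed.

Lemma Sr_rcons s x : Sr (rcons s x) = Sr s + (x == 0) * (size s).+1.
Proof. rewrite -cats1 Sr_cat /= /zero /=. case: (x == 0) => /=; lia. Qed.

Lemma S_Sr w : \sum_(0 <= i < size w | nth 0 w i == 0) i.+1 = Sr w.
Proof.
elim/last_ind: w => [|w x IH]; first by rewrite big_geq.
rewrite size_rcons big_mkcond big_nat_recr //= -big_mkcond /= Sr_rcons -IH.
rewrite nth_rcons ltnn eqxx.
congr (_ + _); last by case: (x == 0); rewrite ?mul1n.
apply: congr_big_nat => // i /andP [_ Hi]. by rewrite nth_rcons Hi.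
Qed.

Lemma maj_rcons s b : maj (rcons s b) = maj s + (b < last 0 s) * size s.
Proof.
rewrite /maj size_rcons /=.
case: s => [|y s]; first by rewrite /= !big_geq.
rewrite [size (y :: s)]/= /= big_mkcond big_nat_recr //= -big_mkcond /=.
congr (_ + _).
  apply: congr_big_nat => // i /andP [_ Hi].
  rewrite -rcons_cons !nth_rcons /= Hi ltnS (ltnW Hi) //.
rewrite -rcons_cons !nth_rcons /= ltnn eqxx ltnSn.
have -> : nth 0 (y :: s) (size s) = last y s.
  by rewrite (last_nth 0).
by case: (b < last y s); rewrite ?mul1n.
Qed.

Lemma Pos_rcons s b : Pos (rcons s b) = if 0 < b then rcons (Pos s) b else Pos s.
Proof. by rewrite /Pos filter_rcons. Qed.
Lemma Pos_cat a b : Pos (a ++ b) = Pos a ++ Pos b.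
Proof. by rewrite /Pos filter_cat. Qed.

Lemma size_zero_Pos s : size s = zero s + size (Pos s).
Proof.
rewrite /zero /Pos size_filter -(count_predC (pred1 0) s).
congr (_ + _); apply: eq_count => x /=; by case: x.
Qed.

Lemma Pos_nseq k : Pos (nseq k 0) = [::].
Proof. by elim: k. Qed.
Lemma zero_nseq k : zero (nseq k 0) = k.
Proof. by elim: k => //= k ->. Qed.

Lemma delta_aux_props k s :
  [/\ size (delta_aux k s) = k + size s, Pos (delta_aux k s) = Pos s &
      zero (delta_aux k s) = k + zero s].
Proof.
elim: s k => [|x s IH] k /=.
  by rewrite size_nseq Pos_nseq zero_nseq !addn0.
case: (eqVneq x 0) => [->|Hx] /=.
  have [h1 h2 h3] := IH k.+1. by rewrite h1 h2 h3 /Pos /=; split => //; lia.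
have [h1 h2 h3] := IH 0.
rewrite size_cat Pos_cat zero_cat h1 h2 h3 size_nseq Pos_nseq zero_nseq.
rewrite (negbTE Hx) /=. split => //; lia.
Qed.

Lemma nseqS_cat k (t : seq nat) : nseq k.+1 0 ++ t = nseq k 0 ++ 0 :: t.
Proof. by elim: k => //= k ->. Qed.

Lemma last1_cons x s : 0 < last 1 (x :: s) -> 0 < last 1 s.
Proof. by case: s. Qed.

Lemma delta_head k s : s != [::] -> 0 < last 1 s ->
  exists x t, 0 < x /\ delta_aux k s = x :: nseq k 0 ++ t.
Proof.
elim: s k => [|x s IH] k // _ Hl /=.
case: (eqVneq x 0) => [Ex|Hx].
  have Hs : s != [::] by move: Hl; rewrite Ex; clear IH; case: s.
  have [y [t [Hy ->]]] := IH k.+1 Hs (last1_cons Hl).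
  exists y, (0 :: t); split => //. congr (_ :: _). by rewrite nseqS_cat.
exists x, (delta_aux 0 s); split => //. by rewrite lt0n.
Qed.

Lemma Sr_delta k s : s != [::] -> 0 < last 1 s ->
  Sr (delta_aux k s) = Sr (nseq k 0 ++ s) + k + zero s.
Proof.
elim: s k => [|x s IH] k // _ Hl /=.
case: (eqVneq x 0) => [Ex|Hx].
  have Hs : s != [::] by move: Hl; rewrite Ex; clear IH; case: s.
  rewrite Ex /= IH // ?(last1_cons Hl) // nseqS_cat. lia.
rewrite /= Sr_cat zero_cat Sr_cat /= (negbTE Hx) size_nseq zero_nseq.
case: (eqVneq s [::]) => [->|Hs] /=.
  rewrite /zero /=. lia.
have [_ _ h3] := delta_aux_props 0 s.
rewrite IH // ?(last1_cons Hl) // h3 /=. lia.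
Qed.

Lemma delta_nomix k s1 y s2 : 0 < last 1 (0 :: s1) -> 0 < last 1 (y :: s2) -> y != 0 ->
  delta_aux k (0 :: s1) != delta_aux k (y :: s2).
Proof.
move=> H1 H2 Hy; apply/eqP => /=.
have Hs : s1 != [::] by move: H1; case: s1.
have [x [t [Hx ->]]] := delta_head k.+1 Hs (last1_cons H1).
rewrite (negbTE Hy) => /(congr1 (drop k.+1)) /=.
change (0 :: nseq k 0 ++ t) with (nseq k.+1 0 ++ t); rewrite nseqS_cat !drop_size_cat ?size_nseq //.
case: (eqVneq s2 [::]) => [->|Hs2] //.
have [x' [t' [Hx' ->]]] := delta_head 0 Hs2 (last1_cons H2).
by case=> E; move: Hx'; rewrite -E.
Qed.

Lemma delta_empty k y s : 0 < last 1 (y :: s) -> nseq k 0 != delta_aux k (y :: s).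
Proof.
move=> H; apply/eqP.
have [x [t [Hx ->]]] := delta_head k (isT : y :: s != [::]) H.
move/(congr1 size). rewrite /= size_cat size_nseq. lia.
Qed.

Lemma delta_inj k s1 s2 : 0 < last 1 s1 -> 0 < last 1 s2 ->
  delta_aux k s1 = delta_aux k s2 -> s1 = s2.
Proof.
elim: s1 k s2 => [|x s1 IH] k [|y s2] H1 H2 //.
- by move=> E; exfalso; move/eqP: (delta_empty k H2); apply; exact: E.
- by move=> E; exfalso; move/eqP: (delta_empty k H1); apply; exact: (esym E).
case: (eqVneq x 0) => [Ex|Hx]; case: (eqVneq y 0) => [Ey|Hy].
- subst => /= /IH -> //; [exact: (last1_cons H1) | exact: (last1_cons H2)].
- subst. move=> E; exfalso; move/eqP: (delta_nomix k H1 H2 Hy); apply; exact: E.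
- subst. move=> E; exfalso; move/eqP: (delta_nomix k H2 H1 Hx); apply; exact: (esym E).
rewrite /= (negbTE Hx) (negbTE Hy) => -[->] /(congr1 (drop k)).
rewrite !drop_size_cat ?size_nseq // => /IH -> //.
  exact: (last1_cons H1).
exact: (last1_cons H2).
Qed.

Lemma F3_rcons u b : F3 (rcons u b) = F3_step u (F3 u) b.
Proof. by rewrite /F3 rev_rcons /= revK. Qed.

Lemma lastPos s : last 0 (Pos s) = nth 0 (rev s) (find (fun x => x != 0) (rev s)).
Proof.
elim/last_ind: s => [|s x IH] //.
rewrite Pos_rcons rev_rcons /=. case: x => [|x] //=.
by rewrite last_rcons.
Qed.

Lemma F3_step_eq u fu b : F3_step u fu b =
  if all (pred1 0) u then rcons u b
  else if last 0 (Pos u) <= b then rcons fu b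
  else if last 0 u == 0 then rcons (0 :: take (size fu).-1 fu) b
  else rcons (delta fu) b.
Proof.
rewrite /F3_step lastPos.
case/lastP: u => [|u x] //=.
case: (all (pred1 0) _) => //.
case: (_ <= b) => //.
rewrite rev_rcons last_rcons /=. by case: x.
Qed.

Lemma all0_Pos u : all (pred1 0) u = (Pos u == [::]).
Proof. elim: u => [|x u IH] //=. rewrite /Pos /=. case: x => //=. Qed.

Lemma nseq_rcons0 k : nseq k.+1 0 = rcons (nseq k 0) 0.
Proof. by elim: k => //= k <-. Qed.

Lemma maj_nil : maj [::] = 0. Proof. by rewrite /maj big_geq. Qed.
Lemma maj_1 b : maj [:: b] = 0. Proof. by rewrite /maj big_geq. Qed.

Lemma allzero u : all (pred1 0) u ->
  [/\ maj u = 0, Sr u = T (size u), zero u = size u & last 0 u = 0].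
Proof.
move/all_pred1P => ->. rewrite size_nseq.
elim: (size u) => [|k [h1 h2 h3 h4]]; first by rewrite maj_nil T0.
rewrite nseq_rcons0 maj_rcons Sr_rcons zero_rcons last_rcons size_nseq h1 h2 h3 h4 TS.
split => //; lia.
Qed.

Lemma Pos_last_pos u : Pos u != [::] -> 0 < last 0 (Pos u).
Proof.
have : all (fun x => 0 < x) (Pos u) by apply: filter_all.
case: (Pos u) => [|y s] // /allP Ha _ /=. apply: Ha. exact: mem_last.
Qed.

Lemma last_le_lastPos u : last 0 u <= last 0 (Pos u).
Proof.
case/lastP: u => [|u x] //. rewrite Pos_rcons last_rcons.
by case: x => // x; rewrite /= last_rcons.
Qed.

Lemma last_eq_lastPos u : 0 < last 0 u -> last 0 (Pos u) = last 0 u.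
Proof.
case/lastP: u => [|u x] //. rewrite Pos_rcons last_rcons.
by case: x => // x; rewrite /= last_rcons.
Qed.

Lemma T_le_Sr s : T (zero s) <= Sr s.
Proof.
elim/last_ind: s => [|s x IH]; first by rewrite T0.
rewrite zero_rcons Sr_rcons. have := size_zero_Pos s.
case: (x == 0) => /=; last by rewrite addn0; lia.
rewrite addn1 TS. lia.
Qed.

Lemma inv w : [/\ size (F3 w) = size w, Pos (F3 w) = Pos w, zero (F3 w) = zero w,
  last 0 (F3 w) = last 0 w & maj w + T (zero w) = Sr (F3 w) + maj (Pos w)].
Proof.
elim/last_ind: w => [|u b [h1 h2 h3 h4 h5]].
  by rewrite /= T0 maj_nil.
rewrite F3_rcons F3_step_eq.
case: ifP => Hall.
  have [m0 s0 z0 l0] := allzero Hall.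
  rewrite maj_rcons zero_rcons Sr_rcons Pos_rcons l0 m0 s0 z0.
  move: Hall; rewrite all0_Pos => /eqP ->.
  case: b => [|b] /=; rewrite ?maj_nil ?maj_1 ?addn0 ?addn1 ?TS; split => //; lia.
have HP : Pos u != [::] by rewrite -all0_Pos Hall.
have Ha := Pos_last_pos HP.
set a := last 0 (Pos u) in Ha *.
have Hsz := size_zero_Pos u.
have HszF := size_zero_Pos (F3 u).
case: ifP => Hab.
  have Hb : 0 < b by apply: leq_trans Hab.
  have Hl : last 0 u <= a := last_le_lastPos u.
  have Hb0 : (b == 0) = false by case: b Hb Hab.
  rewrite !size_rcons !Pos_rcons !zero_rcons !last_rcons !maj_rcons Sr_rcons Hb h1 h2 h3 -/a Hb0.
  rewrite maj_rcons -/a (ltnNge b a) Hab /= (ltnNge b (last 0 u)) (leq_trans Hl Hab) /=.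
  rewrite !mul0n !addn0; split => //; lia.
have Hba : b < a by rewrite ltnNge Hab.
have Hu : u != [::] by case: u Hall {h1 h2 h3 h4 h5 HP Ha a Hsz HszF Hab Hba}.
have HF : F3 u != [::] by rewrite -size_eq0 h1 size_eq0.
case: ifP => Hl0.
  move/eqP: Hl0 => Hl0.
  move: HF h1 h2 h3 h4 h5 HszF; case/lastP: (F3 u) => [|F c] // _ h1 h2 h3 h4 h5 HszF.
  rewrite last_rcons Hl0 in h4; subst c.
  rewrite size_rcons /= -(cats1 F 0) take_size_cat; last by rewrite size_cat addn1.
  rewrite Pos_rcons /= in h2. rewrite zero_rcons addn1 in h3.
  rewrite Sr_rcons /= mul1n in h5. rewrite size_rcons in h1.
  rewrite size_rcons Pos_rcons zero_rcons /= addn1 in HszF.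
  rewrite !size_rcons !Pos_rcons !zero_rcons !last_rcons maj_rcons Sr_rcons Hl0 h2 -h3 -h1 ltn0 mul0n addn0.
  rewrite -h3 TS in h5.
  case: b Hba Hab => [|b] Hba Hab /=.
    rewrite ?addn0 ?addn1 ?mul1n ?TS. split => //. lia.
  rewrite maj_rcons -/a Hba ?mul1n ?addn0 ?mul0n ?addn0 TS. split => //. rewrite h2 in HszF. lia.
have Hlu : 0 < last 0 u by rewrite lt0n Hl0.
have Ea : a = last 0 u by rewrite /a last_eq_lastPos.
have HF1 : 0 < last 1 (F3 u).
  move: HF h4; case: (F3 u) => [|y t] //= _ ->. done.
have [d1 d2 d3] := delta_aux_props 0 (F3 u).
have d4 := Sr_delta 0 HF HF1.
rewrite /= in d4.
rewrite /delta !size_rcons !Pos_rcons !zero_rcons !last_rcons maj_rcons Sr_rcons d1 d2 d3 d4 h1 h2 h3 -Ea Hba mul1n.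
rewrite h2 h3 in HszF.
case: b Hba Hab => [|b] Hba Hab /=.
  rewrite ?addn0 ?addn1 ?mul1n ?TS. rewrite ?add0n. split => //. lia.
rewrite maj_rcons -/a Hba ?mul1n ?addn0 ?mul0n ?addn0. rewrite ?add0n. split => //. lia.
Qed.

Lemma last1E (F : seq nat) : F != [::] -> last 1 F = last 0 F.
Proof. by case: F. Qed.

Lemma rcons_take0 (F : seq nat) : F != [::] -> last 0 F = 0 ->
  F = rcons (take (size F).-1 F) 0.
Proof.
case/lastP: F => [|F c] // _; rewrite last_rcons => ->.
rewrite size_rcons /=; congr rcons; by rewrite -cats1 take_size_cat.
Qed.

Lemma delta_pos_head F b : F != [::] -> 0 < last 0 F ->
  exists x t, 0 < x /\ rcons (delta F) b = x :: t.
Proof.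
move=> HF Hl. have H1 : 0 < last 1 F by rewrite last1E.
have [x [t [Hx Ed]]] := delta_head 0 HF H1.
by exists x, (rcons t b); rewrite /delta Ed.
Qed.

Lemma F3_inj w1 w2 : size w1 = size w2 -> Pos w1 = Pos w2 -> F3 w1 = F3 w2 -> w1 = w2.
Proof.
elim/last_ind: w1 w2 => [|u1 b1 IH] w2; case/lastP: w2 => [|u2 b2] //;
  rewrite ?size_rcons // => /eqP; rewrite eqSS => /eqP Hs HP E.
have Eb : b1 = b2.
  have [_ _ _ l1 _] := inv (rcons u1 b1). have [_ _ _ l2 _] := inv (rcons u2 b2).
  by move: l1 l2; rewrite !last_rcons E => <-.
subst b2.
have HPu : Pos u1 = Pos u2.
  move: HP; rewrite !Pos_rcons; case: (0 < b1) => //. by move/rcons_inj => [].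
move: E; rewrite !F3_rcons !F3_step_eq !all0_Pos HPu.
case: ifP => [_ -> //|HP0].
have Hu1 : u1 != [::] by apply/eqP => E1; move: HP0; rewrite -HPu E1.
have Hu2 : u2 != [::] by apply/eqP => E1; move: HP0; rewrite E1.
have [s1 _ _ l1 _] := inv u1. have [s2 _ _ l2 _] := inv u2.
have HF1 : F3 u1 != [::] by rewrite -size_eq0 s1 size_eq0.
have HF2 : F3 u2 != [::] by rewrite -size_eq0 s2 size_eq0.
case: ifP => Hab.
  by move/rcons_inj => [] /IH -> //.
case: (eqVneq (last 0 u1) 0) => L1; case: (eqVneq (last 0 u2) 0) => L2.
- move/rcons_inj => [] E.
  have E' : F3 u1 = F3 u2.
    by rewrite [LHS](rcons_take0 HF1) ?l1 // [RHS](rcons_take0 HF2) ?l2 // E.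
  by rewrite (IH u2).
- have Hl2 : 0 < last 0 (F3 u2) by rewrite l2 lt0n.
  have [x [t [Hx E]]] := delta_pos_head b1 HF2 Hl2.
  rewrite E. by case=> Ex; move: Hx; rewrite -Ex.
- have Hl1 : 0 < last 0 (F3 u1) by rewrite l1 lt0n.
  have [x [t [Hx E]]] := delta_pos_head b1 HF1 Hl1.
  rewrite E. by case=> Ex; move: Hx; rewrite Ex.
move/rcons_inj => [] /delta_inj E.
rewrite (IH u2) // E //; rewrite last1E // ?l1 ?l2 lt0n //.
Qed.

Fixpoint words (n M : nat) : seq (seq nat) :=
  match n with
  | 0 => [:: [::]]
  | n'.+1 => [seq x :: s | x <- iota 0 M.+1, s <- words n' M]
  end.

Lemma words_complete M s : all (fun x => x <= M) s -> s \in words (size s) M.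
Proof.
elim: s => [|x s IH] // /andP [Hx Hs].
change (x :: s \in [seq y :: t | y <- iota 0 M.+1, t <- words (size s) M]).
apply: (allpairs_f (fun y t => y :: t)).
  by rewrite mem_iota add0n ltnS Hx.
exact: IH.
Qed.

Lemma le_sumn x s : x \in s -> x <= sumn s.
Proof.
elim: s => [|y s IH] //=; rewrite inE => /orP [/eqP ->|/IH]; lia.
Qed.

Lemma Sh_bound n v w : Sh n v w -> all (fun x => x <= sumn v) w.
Proof.
case/and3P => _ _ /eqP HP. apply/allP => x Hx.
case: x Hx => [|x] Hx //. apply: le_sumn. rewrite -HP /Pos mem_filter. by rewrite Hx.
Qed.

Lemma ShE n v w : Sh n v w = [&& size w == n, zero w == n - size v & Pos w == v].
Proof. by []. Qed.

Lemma Sh_F3 n v w : Sh n v w -> Sh n v (F3 w).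
Proof.
have [s1 p1 z1 _ _] := inv w. by rewrite !ShE s1 p1 z1.
Qed.

Theorem theorem1p2 (v : seq nat) (n : nat) :
  v != [::] -> all (fun x => 0 < x) v -> size v <= n ->
  [/\ (forall w, Sh n v w -> Sh n v (F3 w)),
      {in Sh n v &, injective F3},
      (forall w', Sh n v w' -> exists2 w, Sh n v w & F3 w = w') &
      (forall w, Sh n v w -> maj w = mafz (F3 w) /\ last 0 w = last 0 (F3 w))].
Proof.
move=> _ _ _.
have Hinj : {in Sh n v &, injective F3}.
  move=> w1 w2; rewrite !unfold_in => /and3P [/eqP h1 _ /eqP h2] /and3P [/eqP h3 _ /eqP h4].
  apply: F3_inj; [by rewrite h1 h3 | by rewrite h2 h4].
split => //.
- exact: Sh_F3.
- move=> w' Hw'.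
  set L := undup (filter (Sh n v) (words n (sumn v))).
  have memL w : (w \in L) = Sh n v w.
    rewrite mem_undup mem_filter. apply/andP/idP => [[] //|H]; split => //.
    case/and3P: (H) => /eqP <- _ _. apply: words_complete. exact: Sh_bound H.
  have HL' : uniq (map F3 L).
    rewrite map_inj_in_uniq ?undup_uniq //.
    move=> x y Hx Hy; apply: Hinj; [move: Hx | move: Hy]; by rewrite memL unfold_in.
  have Hsub : {subset map F3 L <= L}.
    move=> x /mapP [y Hy ->]. rewrite memL. apply: Sh_F3. by rewrite -memL.
  have Hsz : size L <= size (map F3 L) by rewrite size_map.
  have [_ Heq] := uniq_min_size HL' Hsub Hsz.
  have : w' \in map F3 L by rewrite Heq memL.
  case/mapP => w Hw ->. exists w => //. by rewrite -memL.
- move=> w Hw. have [s1 p1 z1 l1 m1] := inv w. split => //.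
  rewrite /mafz S_Sr z1 p1 -/(T (zero w)).
  have := T_le_Sr (F3 w). rewrite z1. lia.
Qed.
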